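(* Let $\Omega,\Omega^*$ be two compact metric spaces and let $c\in C(\Omega\times\Omega^* )$. Let $\mu_1,\mu_2$ be two Borel probability measures on $\Omega$ and let $\nu$ be a Borel probability measure on $\Omega^*$. For $i=1,2$, take $\phi_i\in\Phi_c(\mu_i,\nu)$. Let $U$ be a Borel subset of $\Omega$ and suppose that $\mu_1\leq\mu_2$ on $U$ and that $\phi_1\leq\phi_2$ on $\Omega\setminus U$. Then \[ \phi_1\wedge\phi_2\in\Phi_c(\mu_1,\nu)\quad\text{and}\quad \phi_1\vee\phi_2\in\Phi_c(\mu_2,\nu). \] Additionally, $\phi_1\leq\phi_2$ on the support of $\mu_2-\mu_1$.
   Context: For $\phi\in C(\Omega)$, its $c$-transform is $\phi^c(y)=\sup_{x\in\Omega}\phi(x)-c(x,y)$, $y\in\Omega^*$ (a continuous function). For positive finite Borel measures $\mu$ on $\Omega$ and $\nu$ on $\Omega^*$, the optimal transport cost is $\mathcal T_c(\mu,\nu)=\inf_{\pi\in\Pi(\mu,\nu)}\int c\,d\pi$, where $\Pi(\mu,\nu)$ is the set of positive measures on $\Omega\times\Omega^*$ with marginals $\mu,\nu$ (and $\mathcal T_c=+\infty$ if the masses differ); by duality $\mathcal T_c(\mu,\nu)=\max_{\phi\in C(\Omega)}\int_\Omega\phi\,d\mu-\int_{\Omega^*}\phi^c\,d\nu$. The set of Kantorovich potentials is $\Phi_c(\mu,\nu)=\{\phi\in C(\Omega):\int_\Omega\phi\,d\mu-\int_{\Omega^*}\phi^c\,d\nu=\mathcal T_c(\mu,\nu)\}$.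 $\wedge,\vee$ denote pointwise minimum and maximum. ''$\mu_1\leq\mu_2$ on $U$'' means $\mu_1(A)\leq\mu_2(A)$ for every Borel $A\subset U$. The support of a signed measure $\sigma$ is the support of its total variation $|\sigma|$, i.e. the complement of the largest open set of $|\sigma|$-measure zero. *)

(* Defs.v *)
From HB Require Import structures.
From mathcomp Require Import all_boot all_order all_algebra.
From mathcomp Require Import all_classical all_reals all_analysis.
Set Implicit Arguments. Unset Strict Implicit. Unset Printing Implicit Defensive.
Import Order.TTheory GRing.Theory Num.Theory.
Import numFieldNormedType.Exports.
Local Open Scope classical_set_scope.
Local Open Scope ring_scope.

Definition Borel (T : ptopologicalType) := g_sigma_algebraType (@open T).

Section OT.
Context (R : realType) (T1 T2 : ptopologicalType).

Definition ctrans (c : T1 * T2 -> R) (phi : T1 -> R) (y : T2) : R :=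
  sup [set phi x - c (x, y) | x in [set: T1]].

Definition couplings (mu : {measure set (Borel T1) -> \bar R})
    (nu : {measure set (Borel T2) -> \bar R}) :
    set {measure set (Borel T1 * Borel T2)%type -> \bar R} :=
  [set pi | (forall A : set (Borel T1), measurable A ->
               pi (A `*` [set: Borel T2]) = mu A) /\
            (forall B : set (Borel T2), measurable B ->
               pi ([set: Borel T1] `*` B) = nu B)].

(* T_c(mu,nu) = inf_{pi in Pi(mu,nu)} int c dpi  (= +oo if Pi(mu,nu) is empty) *)
Definition ot_cost (c : T1 * T2 -> R) (mu : {measure set (Borel T1) -> \bar R})
    (nu : {measure set (Borel T2) -> \bar R}) : \bar R :=
  ereal_inf [set (\int[pi]_z (c z)%:E)%E | pi in couplings mu nu].

Definition kpotentials (c : T1 * T2 -> R) (mu : {measure set (Borel T1) -> \bar R})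
    (nu : {measure set (Borel T2) -> \bar R}) : set (T1 -> R) :=
  [set phi | continuous phi /\
     (\int[mu]_x (phi x)%:E - \int[nu]_y (ctrans c phi y)%:E)%E = ot_cost c mu nu].
End OT.

Section Support.
Context (R : realType) (T : ptopologicalType).

(* total variation |mu2 - mu1|(E) of the signed measure mu2 - mu1 (for finite
   measures): sup over finite Borel partitions (A_i)_{i<n} of E of
   sum_i |(mu2 - mu1)(A_i)| *)
Definition total_variation (mu1 mu2 : {measure set (Borel T) -> \bar R})
    (E : set (Borel T)) : \bar R :=
  ereal_sup [set s | exists (n : nat) (A : nat -> set (Borel T)),
     [/\ (forall i, measurable (A i)), trivIset `I_n A,
         \bigcup_(i in `I_n) A i = E &
         s = (\sum_(i < n) `|mu2 (A i) - mu1 (A i)|)%E]].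

(* support of mu2 - mu1: complement of the largest open set of
   |mu2 - mu1|-measure zero (the union of all such open sets) *)
Definition signed_support (mu1 mu2 : {measure set (Borel T) -> \bar R}) : set T :=
  ~` \bigcup_(N in [set N : set T | open N /\
        total_variation mu1 mu2 N = 0%E]) N.
End Support.

(* Main.v *)
Require Import Defs.
From HB Require Import structures.
From mathcomp Require Import all_boot all_order all_algebra.
From mathcomp Require Import all_classical all_reals all_analysis.
From mathcomp Require Import lra.
Set Implicit Arguments. Unset Strict Implicit. Unset Printing Implicit Defensive.
Import Order.TTheory GRing.Theory Num.Theory.
Import numFieldNormedType.Exports.
Local Open Scope classical_set_scope.
Local Open Scope ring_scope.
Section Meas.
Context (R : realType) (T : ptopologicalType).

Lemma open_measB (A : set T) : open A -> measurable (A : set (Borel T)).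
Proof. by move=> oA; apply: sub_sigma_algebra. Qed.

Lemma lsc_measB (f : T -> R) : (forall a, open [set x | a < f x]) ->
  measurable_fun [set: Borel T] (f : Borel T -> R).
Proof.
move=> hf; apply: (measurability _ (measurable_realfun.RGenOInfty.measurableE R)).
move=> /= _ [_ [a ->]] <-; apply: measurableI => //; apply: open_measB.
rewrite preimage_itvoy; exact: hf.
Qed.

Lemma cont_measB (f : T -> R) : continuous f ->
  measurable_fun [set: Borel T] (f : Borel T -> R).
Proof.
move=> cf; apply: lsc_measB => a.
rewrite -preimage_itvoy; apply: open_comp; first by move=> x _; exact: cf.
exact: interval_open.
Qed.

End Meas.

Lemma cont_bounded (R : realType) (T : topologicalType) (f : T -> R) : compact [set: T] -> continuous f ->
  exists M : R, forall x, `|f x| <= M.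
Proof.
move=> cT cf.
have : compact (f @` setT : set R^o).
  by apply: continuous_compact => //; apply: continuous_subspaceT.
move/compact_bounded => [M [_ HM]].
exists (`|M| + 1) => x; apply: (HM (`|M| + 1)); last by exists x.
by rewrite (le_lt_trans (ler_norm _)) ?ltrDl.
Qed.


Section CT.
Context (R : realType) (T1 T2 : ptopologicalType).
Variable (c : T1 * T2 -> R) (B : R) (hcB : forall z, `|c z| <= B).
Hypothesis hc : continuous c.

Lemma ctrans_ub (phi : T1 -> R) (A : R) (hA : forall x, `|phi x| <= A) x y :
  phi x - c (x, y) <= ctrans c phi y.
Proof.
apply: ub_le_sup; last by exists x.
exists (A + B) => _ [z _ <-].
have := hA z; have := hcB (z, y).
rewrite !ler_norml => /andP[? ?] /andP[? ?]; lra.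
Qed.

Lemma ctrans_le (phi : T1 -> R) y r :
  (forall x, phi x - c (x, y) <= r) -> ctrans c phi y <= r.
Proof.
move=> h; apply: ge_sup; first by exists (phi point - c (point, y)), point.
by move=> _ [z _ <-].
Qed.

Lemma ctrans_bound (phi : T1 -> R) (A : R) (hA : forall x, `|phi x| <= A) y :
  `|ctrans c phi y| <= A + B.
Proof.
rewrite ler_norml; apply/andP; split.
  have := ctrans_ub hA point y; have := hA point; have := hcB (point, y).
  rewrite !ler_norml => /andP[? ?] /andP[? ?]; lra.
apply: ctrans_le => x; have := hA x; have := hcB (x, y).
rewrite !ler_norml => /andP[? ?] /andP[? ?]; lra.
Qed.

Lemma ctrans_lsc (phi : T1 -> R) (A : R) (hA : forall x, `|phi x| <= A) a :
  open [set y | a < ctrans c phi y].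
Proof.
have -> : [set y | a < ctrans c phi y] =
    \bigcup_(x in setT) [set y | a < phi x - c (x, y)].
  apply/seteqP; split => y /=.
    move=> /sup_gt => /(_ (ex_intro _ (phi point - c (point, y)) (ex_intro2 _ _ point I erefl))).
    by move=> [_ [x _ <-] h]; exists x.
  by move=> [x _ h]; apply: (lt_le_trans h); exact: ctrans_ub hA _ _.
apply: bigcup_open => x _.
have cx : continuous (fun y => phi x - c (x, y)).
  move=> y; apply: cvgB; first exact: cvg_cst.
  apply: continuous_comp; last exact: hc.
  exact: (cvg_pair (cvg_cst x) cvg_id).
have -> : [set y | a < phi x - c (x, y)] = (fun y => phi x - c (x, y)) @^-1` `]a, +oo[.
  by rewrite preimage_itvoy.
apply: open_comp; first by move=> y _; exact: cx.
exact: interval_open.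
Qed.

Lemma ctrans_mono (phi psi : T1 -> R) (A : R) (hA : forall x, `|psi x| <= A) :
  (forall x, phi x <= psi x) -> forall y, ctrans c phi y <= ctrans c psi y.
Proof.
move=> h y; apply: ctrans_le => x; apply: le_trans (ctrans_ub hA x y).
by rewrite lerD2r.
Qed.

Lemma ctrans_max (phi psi : T1 -> R) (A : R) (hA1 : forall x, `|phi x| <= A)
  (hA2 : forall x, `|psi x| <= A) y :
  ctrans c (fun x => Num.max (phi x) (psi x)) y <=
  Num.max (ctrans c phi y) (ctrans c psi y).
Proof.
apply: ctrans_le => x; rewrite le_max.
have h1 := ctrans_ub hA1 x y; have h2 := ctrans_ub hA2 x y.
by case: (leP (phi x) (psi x)) => h; rewrite ?h1 ?h2 ?orbT.
Qed.

End CT.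
Section Integ.
Context d (T : measurableType d) (R : realType) (mu : {measure set T -> \bar R}).
Local Open Scope ereal_scope.

Lemma le_int_ge0 (f g : T -> \bar R) : (forall x, 0 <= f x) ->
  (forall x, f x <= g x) -> \int[mu]_x f x <= \int[mu]_x g x.
Proof.
move=> f0 fg; rewrite !ge0_integralTE //; last by move=> x; exact: le_trans (f0 x) (fg x).
apply: ge_ereal_sup => _ [h hf <-].
by apply: ereal_sup_ubound; exists h => // x; exact: le_trans (hf x) (fg x).
Qed.

Lemma le_int_gen (f g : T -> \bar R) :
  (forall x, f x <= g x) -> \int[mu]_x f x <= \int[mu]_x g x.
Proof.
move=> fg; rewrite (integralE _ _ f) (integralE _ _ g); apply: leeB.
  apply: le_int_ge0 => x; first exact: funepos_ge0.
  by apply: (@funepos_le _ _ setT) => //; rewrite inE.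
apply: le_int_ge0 => x; first exact: funeneg_ge0.
by apply: (@funeneg_le _ _ setT) => //; rewrite inE.
Qed.

Lemma bint (f : T -> R) : mu setT < +oo -> measurable_fun setT f ->
  (exists M, forall x, (`|f x| <= M)%R) -> mu.-integrable setT (EFin \o f).
Proof.
move=> mfin mf [M hM]; apply: measurable_bounded_integrable => //.
exists M; split; first by rewrite num_real.
move=> N hN x _ /=; exact: le_trans (hM x) (ltW hN).
Qed.

End Integ.

Section WD.
Context (R : realType) (T1 T2 : ptopologicalType).
Variable (c : T1 * T2 -> R) (B : R) (hcB : forall z, `|c z| <= B).
Hypothesis hc : continuous c.

Lemma weak_dual (mu : probability (Borel T1) R) (nu : probability (Borel T2) R)
  (phi : T1 -> R) (A : R) : continuous phi -> (forall x, `|phi x| <= A) ->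
  (\int[mu]_x (phi x)%:E - \int[nu]_y (ctrans c phi y)%:E <= ot_cost c mu nu)%E.
Proof.
move=> cphi hA; rewrite /ot_cost; apply: le_ereal_inf_tmp => _ [pi [hm hn] <-].
pose g1 := fun z : (Borel T1 * Borel T2)%type => phi z.1.
pose g2 := fun z : (Borel T1 * Borel T2)%type => ctrans c phi z.2.
have piT : pi setT = 1%E by rewrite -setXTT hm //; exact: probability_setT.
have pifin : (pi setT < +oo)%E by rewrite piT ltry.
have mphi := cont_measB cphi.
have mpsi := lsc_measB (ctrans_lsc hcB hc hA).
have mg1 : measurable_fun setT g1 := measurableT_comp mphi measurable_fst.
have mg2 : measurable_fun setT g2 := measurableT_comp mpsi measurable_snd.
have ig1 : pi.-integrable setT (EFin \o g1).
  by apply: bint => //; exists A => z; exact: hA.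
have ig2 : pi.-integrable setT (EFin \o g2).
  by apply: bint => //; exists (A + B) => z; exact: (ctrans_bound hcB hA z.2).
have e1 : (\int[pi]_z (g1 z)%:E = \int[mu]_x (phi x)%:E)%E.
  transitivity (\int[pushforward pi fst]_x (phi x)%:E)%E.
    rewrite (@integral_pushforward _ _ _ _ _ fst measurable_fst) //.
    exact/measurable_realfun.measurable_EFinP.
  apply: (eq_measure_integral mu) => S mS _ /=; rewrite /pushforward.
  have -> : fst @^-1` S = S `*` [set: Borel T2] by apply/seteqP; split => -[x y] /=; [move=> h; split|case].
  exact: hm.
have e2 : (\int[pi]_z (g2 z)%:E = \int[nu]_y (ctrans c phi y)%:E)%E.
  transitivity (\int[pushforward pi snd]_y (ctrans c phi y)%:E)%E.
    rewrite (@integral_pushforward _ _ _ _ _ snd measurable_snd) //.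
    exact/measurable_realfun.measurable_EFinP.
  apply: (eq_measure_integral nu) => S mS _ /=; rewrite /pushforward.
  have -> : snd @^-1` S = [set: Borel T1] `*` S by apply/seteqP; split => -[x y] /=; [move=> h; split|case].
  exact: hn.
rewrite -e1 -e2 -integralB_EFin //; apply: le_int_gen => -[x y] /=.
rewrite lee_fin /g1 /g2 /=.
have := ctrans_ub hcB hA x y; lra.
Qed.

End WD.
Section Mono.
Context d (T : measurableType d) (R : realType).
Local Open Scope ereal_scope.
Import HBNNSimple.

Lemma le_int_meas (mu1 mu2 : {measure set T -> \bar R}) (U : set T)
  (hmu : forall A, measurable A -> A `<=` U -> mu1 A <= mu2 A)
  (g : T -> \bar R) : (forall x, 0 <= g x) -> (forall x, 0 < g x -> U x) ->
  \int[mu1]_x g x <= \int[mu2]_x g x.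
Proof.
move=> g0 gU; rewrite !ge0_integralTE //.
apply: ge_ereal_sup => _ [h hg <-].
apply: (@le_trans _ _ (sintegral mu2 h)); last by apply: ereal_sup_ubound; exists h.
rewrite !sintegralE; apply: lee_fsum; first exact: fimfunP.
move=> _ [x _ <-].
have hx0 : (0 <= h x)%R by [].
have [hx|hx] := eqVneq (h x) 0%R; first by rewrite hx !mul0e.
apply: lee_wpmul2l; first by rewrite lee_fin.
apply: hmu; first exact: measurable_sfunP.
move=> y /= hy; apply: gU; apply: lt_le_trans (hg y).
by rewrite hy lte_fin lt_def hx hx0.
Qed.
End Mono.

Lemma fin_ex (R : realType) (x : \bar R) : x \is a fin_num -> exists r, x = r%:E.
Proof. by move=> h; exists (fine x); rewrite fineK. Qed.

Section Claim.
Context d (T : measurableType d) (R : realType).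
Variables (mu1 mu2 : probability T R) (U : set T).
Hypothesis hmu : forall A, measurable A -> A `<=` U -> (mu1 A <= mu2 A)%E.
Variables (h : T -> R) (M : R).
Hypotheses (mh : measurable_fun setT h) (hM : forall x, `|h x| <= M)
  (h0 : forall x, 0 <= h x) (hU : forall x, 0 < h x -> U x)
  (Heq : (\int[mu1]_x (h x)%:E = \int[mu2]_x (h x)%:E)%E).

Lemma claim (δ : R) (A : set T) : 0 < δ -> measurable A ->
  A `<=` [set y | δ < h y] -> mu2 A = mu1 A.
Proof.
move=> d0 mA hA.
pose k := fun y => h y - δ * \1_A y.
have k0 : forall y, 0 <= k y.
  move=> y; rewrite /k /indic; case: (boolP (y \in A)) => yA /=.
    rewrite mulr1 subr_ge0; apply/ltW/hA; exact: set_mem.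
  by rewrite mulr0 subr0.
have kh : forall y, k y <= h y.
  move=> y; rewrite /k gerBl; apply: mulr_ge0; first exact: ltW.
  by rewrite /indic; case: (_ \in _).
have mk : measurable_fun setT k.
  apply: measurable_realfun.measurable_funB => //; apply: measurable_realfun.measurable_funM => //.
have dec : forall mu : probability T R,
    (\int[mu]_x (h x)%:E = \int[mu]_x (k x)%:E + δ%:E * mu A)%E.
  move=> mu.
  have fin : (mu setT < +oo)%E by rewrite probability_setT ltry.
  have ik : mu.-integrable setT (EFin \o k).
    apply: bint => //; exists (M + δ) => y.
    have := hM y; have := k0 y; have := kh y.
    by rewrite !ler_norml => ? ? /andP[? ?]; apply/andP; split; lra.
  have ii : mu.-integrable setT (EFin \o (\1_A : T -> R)).
    apply: bint => //.
    exists 1 => y; rewrite /indic; case: (y \in A) => /=; by rewrite ?normr1 ?normr0.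
  have iid : mu.-integrable setT (EFin \o (fun y => δ * \1_A y)).
    apply: bint => //; first by apply: measurable_realfun.measurable_funM.
    exists δ => y; rewrite normrM gtr0_norm // ler_piMr ?(ltW d0) //.
    by rewrite /indic; case: (y \in A) => /=; rewrite ?normr1 ?normr0.
  transitivity (\int[mu]_x ((EFin \o k) \+ (EFin \o (fun y => (δ * \1_A y)%R))) x)%E.
    by apply: eq_integral => y _ /=; rewrite /k /= -EFinD subrK.
  rewrite integralD_EFin //; congr (_ + _)%E.
  transitivity (\int[mu]_x (δ%:E * (\1_A x)%:E))%E.
    by apply: eq_integral => y _ /=; rewrite EFinM.
  by rewrite integralZl // integral_indic // setIT.
have K12 : (\int[mu1]_x (k x)%:E <= \int[mu2]_x (k x)%:E)%E.
  apply: (le_int_meas hmu) => y; first by rewrite lee_fin.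
  rewrite lte_fin => ky; apply: hU; exact: lt_le_trans ky (kh y).
have A12 : (mu1 A <= mu2 A)%E.
  by apply: hmu => // y /hA /= hy; apply: hU; exact: lt_trans hy.
move: Heq; rewrite !dec.
have fk : forall mu : probability T R, (\int[mu]_x (k x)%:E)%E \is a fin_num.
  move=> mu; apply: integrable_fin_num => //.
  apply: bint; [by rewrite -ge0_fin_numE ?measure_ge0 //; exact: fin_num_measure | by [] | ].
  exists (M + δ) => y.
  have := hM y; have := k0 y; have := kh y.
  by rewrite !ler_norml => ? ? /andP[? ?]; apply/andP; split; lra.
have [a1 E1] := fin_ex (fin_num_measure mu1 A mA).
have [a2 E2] := fin_ex (fin_num_measure mu2 A mA).
have [r1 F1] := fin_ex (fk mu1).
have [r2 F2] := fin_ex (fk mu2).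
move: K12 A12; rewrite E1 E2 F1 F2 !lee_fin -!EFinM -!EFinD => K12 A12 e.
have e2 : r1 + δ * a1 = r2 + δ * a2 by case: e.
congr EFin; nra.
Qed.
End Claim.
Section MM.
Context (R : realType).
Implicit Types a b p q m M : R.
Lemma minE a b : Num.min a b = a - Num.max (a - b) 0.
Proof. rewrite /Num.min /Num.max /Order.min /Order.max; case: ifPn => H1; case: ifPn => H2; lra. Qed.
Lemma maxE a b : Num.max a b = b + Num.max (a - b) 0.
Proof. rewrite /Num.max /Order.max; case: ifPn => H1; case: ifPn => H2; lra. Qed.
Lemma min_lel a b : Num.min a b <= a.
Proof. rewrite /Num.min /Order.min; case: ifPn => H1; lra. Qed.
Lemma min_ler a b : Num.min a b <= b.
Proof. rewrite /Num.min /Order.min; case: ifPn => H1; lra. Qed.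
Lemma max_ge0 a : 0 <= Num.max a 0.
Proof. rewrite /Num.max /Order.max; case: ifPn => H1; lra. Qed.
Lemma max_pos a : 0 < Num.max a 0 -> 0 < a.
Proof. rewrite /Num.max /Order.max; case: ifPn => H1; lra. Qed.
Lemma max_id a : 0 < a -> Num.max a 0 = a.
Proof. rewrite /Num.max /Order.max; case: ifPn => H1; lra. Qed.
Lemma add_le p q m M : m <= p -> m <= q -> M <= Num.max p q -> m + M <= p + q.
Proof. rewrite /Num.max /Order.max; case: ifPn => H1; lra. Qed.
Lemma norm_min a b A : `|a| <= A -> `|b| <= A -> `|Num.min a b| <= A.
Proof. rewrite /Num.min /Order.min !ler_norml; case: ifPn => H1; lra. Qed.
Lemma norm_max a b A : `|a| <= A -> `|b| <= A -> `|Num.max a b| <= A.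
Proof. rewrite /Num.max /Order.max !ler_norml; case: ifPn => H1; lra. Qed.
End MM.

Section Prob.
Context d (T : measurableType d) (R : realType) (P : probability T R).
Lemma prob_int (f : T -> R) : measurable_fun setT f ->
  (exists M, forall x, `|f x| <= M) -> P.-integrable setT (EFin \o f).
Proof.
move=> mf hb; apply: bint => //.
by rewrite -ge0_fin_numE ?measure_ge0 //; exact: fin_num_measure.
Qed.
Lemma prob_fin (f : T -> R) : measurable_fun setT f ->
  (exists M, forall x, `|f x| <= M) -> exists r, (\int[P]_x (f x)%:E)%E = r%:E.
Proof. by move=> mf hb; apply: fin_ex; apply: integrable_fin_num => //; exact: prob_int. Qed.
End Prob.

Unset Implicit Arguments.
Set Strict Implicit.

Theorem theorem3p1 (R : realType) (T1 T2 : pseudoPMetricType R)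
  (hT1 : hausdorff_space T1) (hT2 : hausdorff_space T2)
  (cT1 : compact [set: T1]) (cT2 : compact [set: T2])
  (c : T1 * T2 -> R) (hc : continuous c)
  (mu1 mu2 : probability (Borel T1) R) (nu : probability (Borel T2) R)
  (phi1 phi2 : T1 -> R)
  (hphi1 : kpotentials c mu1 nu phi1) (hphi2 : kpotentials c mu2 nu phi2)
  (U : set (Borel T1)) (mU : measurable U)
  (hmu : forall A : set (Borel T1), measurable A -> A `<=` U -> (mu1 A <= mu2 A)%E)
  (hphi : forall x : T1, ~ U x -> phi1 x <= phi2 x) :
  [/\ kpotentials c mu1 nu (fun x => Num.min (phi1 x) (phi2 x)),
      kpotentials c mu2 nu (fun x => Num.max (phi1 x) (phi2 x)) &
      forall x : T1, signed_support mu1 mu2 x -> phi1 x <= phi2 x].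
Proof.
case: hphi1 => cphi1 e1; case: hphi2 => cphi2 e2.
have [A1 hA1] := cont_bounded cT1 cphi1.
have [A2 hA2] := cont_bounded cT1 cphi2.
have cT12 : compact [set: T1 * T2] by rewrite -setXTT; exact: compact_setX.
have [B hB] := @cont_bounded R (T1 * T2)%type c cT12 hc.
set A := `|A1| + `|A2|.
have hA1' x : `|phi1 x| <= A.
  by apply: le_trans (hA1 x) _; have := ler_norm A1; have := normr_ge0 A2; rewrite /A; lra.
have hA2' x : `|phi2 x| <= A.
  by apply: le_trans (hA2 x) _; have := ler_norm A2; have := normr_ge0 A1; rewrite /A; lra.
set psi := fun x => Num.min (phi1 x) (phi2 x).
set Psi := fun x => Num.max (phi1 x) (phi2 x).
set h := fun x => Num.max (phi1 x - phi2 x) 0.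
have hpsi x : `|psi x| <= A by apply: norm_min.
have hPsi x : `|Psi x| <= A by apply: norm_max.
have hh x : `|h x| <= A + A.
  rewrite /h; apply: norm_max; last by rewrite normr0; have := normr_ge0 (phi1 x); have := hA1' x; lra.
  by apply: le_trans (ler_normB _ _) _; exact: lerD.
have cpsi : continuous psi by move=> x; apply: continuous_min; [exact: cphi1|exact: cphi2].
have cPsi : continuous Psi by move=> x; apply: continuous_max; [exact: cphi1|exact: cphi2].
have ch : continuous h.
  move=> x; apply: (@continuous_max R T1 (fun x => phi1 x - phi2 x) (cst 0)); last exact: cvg_cst.
  by apply: cvgB; [exact: cphi1|exact: cphi2].
have h0 x : 0 <= h x by exact: max_ge0.
have hU x : 0 < h x -> U x.
  move=> /max_pos hx; apply: contrapT => nU; have := hphi x nU; lra.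
have mphi1 := cont_measB cphi1. have mphi2 := cont_measB cphi2.
have mpsi := cont_measB cpsi. have mPsi := cont_measB cPsi.
have mh := cont_measB ch.
have bc phi (Aphi : R) : (forall x, `|phi x| <= Aphi) ->
    measurable_fun [set: Borel T2] (ctrans c phi) /\
    exists M, forall y, `|ctrans c phi y| <= M.
  move=> hAp; split; first exact: lsc_measB (ctrans_lsc hB hc hAp).
  by exists (Aphi + B) => y; exact: (ctrans_bound hB hAp y).
have [mc1 bc1] := bc _ _ hA1'. have [mc2 bc2] := bc _ _ hA2'.
have [mcm bcm] := bc _ _ hpsi. have [mcM bcM] := bc _ _ hPsi.
have b1 : exists M, forall x, `|phi1 x| <= M by exists A.
have b2 : exists M, forall x, `|phi2 x| <= M by exists A.
have bm : exists M, forall x, `|psi x| <= M by exists A.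
have bM : exists M, forall x, `|Psi x| <= M by exists A.
have bh : exists M, forall x, `|h x| <= M by exists (A + A).
have L1 : (\int[mu1]_x (psi x)%:E = \int[mu1]_x (phi1 x)%:E - \int[mu1]_x (h x)%:E)%E.
  transitivity (\int[mu1]_x ((phi1 x)%:E - (h x)%:E))%E.
    by apply: eq_integral => x _; rewrite -EFinB /psi minE.
  by apply: integralB_EFin => //; apply: prob_int.
have L2 : (\int[mu2]_x (Psi x)%:E = \int[mu2]_x (phi2 x)%:E + \int[mu2]_x (h x)%:E)%E.
  transitivity (\int[mu2]_x ((EFin \o phi2) \+ (EFin \o h)) x)%E.
    by apply: eq_integral => x _; rewrite /= -EFinD /Psi maxE.
  by apply: integralD_EFin => //; apply: prob_int.
have L3 : (\int[nu]_y (ctrans c psi y)%:E + \int[nu]_y (ctrans c Psi y)%:E <=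
           \int[nu]_y (ctrans c phi1 y)%:E + \int[nu]_y (ctrans c phi2 y)%:E)%E.
  rewrite -!(@integralD_EFin _ _ _ nu setT) //; try by apply: prob_int.
  apply: le_int_gen => y /=; rewrite lee_fin.
  apply: add_le.
  - by apply: (ctrans_mono hB hA1') => x; exact: min_lel.
  - by apply: (ctrans_mono hB hA2') => x; exact: min_ler.
  - exact: (ctrans_max hB hA1' hA2').
have L4 : (\int[mu1]_x (h x)%:E <= \int[mu2]_x (h x)%:E)%E.
  by apply: (le_int_meas hmu) => x; rewrite ?lee_fin ?lte_fin //; exact: hU.
have W1 := weak_dual hB hc mu1 nu cpsi hpsi.
have W2 := weak_dual hB hc mu2 nu cPsi hPsi.
have [a1 Ea1] := prob_fin mu1 mphi1 b1.
have [a2 Ea2] := prob_fin mu2 mphi2 b2.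
have [m1 Em1] := prob_fin mu1 mpsi bm.
have [m2 Em2] := prob_fin mu2 mPsi bM.
have [k1 Ek1] := prob_fin mu1 mh bh.
have [k2 Ek2] := prob_fin mu2 mh bh.
have [c1 Ec1] := prob_fin nu mc1 bc1.
have [c2 Ec2] := prob_fin nu mc2 bc2.
have [cm Ecm] := prob_fin nu mcm bcm.
have [cM EcM] := prob_fin nu mcM bcM.
rewrite -e1 in W1; rewrite -e2 in W2.
move: W1 W2 L1 L2 L3 L4.
rewrite Ea1 Ea2 Em1 Em2 Ek1 Ek2 Ec1 Ec2 Ecm EcM.
rewrite -!EFinB -!EFinD !lee_fin => W1 W2 L1 L2 L3 L4.
have {L1}L1 : m1 = a1 - k1 by case: L1.
have {L2}L2 : m2 = a2 + k2 by case: L2.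
have E1 : m1 - cm = a1 - c1 by lra.
have E2 : m2 - cM = a2 - c2 by lra.
have Hk : k1 = k2 by lra.
split.
- by split => //; rewrite -e1 Em1 Ecm Ea1 Ec1 -!EFinB E1.
- by split => //; rewrite -e2 Em2 EcM Ea2 Ec2 -!EFinB E2.
move=> x hx; rewrite leNgt; apply/negP => Hx.
pose δ := (phi1 x - phi2 x) / 2.
have d0 : 0 < δ by rewrite /δ; lra.
have Heq : (\int[mu1]_x (h x)%:E = \int[mu2]_x (h x)%:E)%E by rewrite Ek1 Ek2 Hk.
have cl := claim hmu mh hh h0 hU Heq d0.
apply: hx; exists [set y | δ < h y]; last first.
  by rewrite /= /h max_id /δ; lra.
have oN : open [set y | δ < h y].
  rewrite -preimage_itvoy.
  by apply: open_comp; [move=> y _; exact: ch | exact: interval_open].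
split; first exact: oN.
have mN : measurable ([set y | δ < h y] : set (Borel T1)) by exact: open_measB.
rewrite /total_variation; apply/eqP; rewrite eq_le; apply/andP; split.
  apply: ge_ereal_sup => _ [n [Af [mAf _ hcup ->]]].
  rewrite big1 // => i _.
  have sub : Af i `<=` [set y | δ < h y].
    by rewrite -hcup => y Ay; exists (nat_of_ord i) => //=; exact: ltn_ord.
  have E := cl _ (mAf i) sub.
  apply: (@eq_trans _ _ `|mu1 (Af i) - mu1 (Af i)|%E); first by congr (`|_ - _|%E).
  by rewrite subee ?abse0 //; exact: fin_num_measure.
apply: ereal_sup_ubound; exists 1%N, (fun=> [set y | δ < h y]); split => //.
- by move=> [|i] [|j]...
- by apply/seteqP; split => [y [i _ //]|y Ny]; exists 0%N.
- rewrite big_ord1; have E := cl _ mN (fun y (hy : [set y | δ < h y] y) => hy).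
  apply: esym; apply: (@eq_trans _ _ `|mu1 [set y | (δ < h y)%R] - mu1 [set y | (δ < h y)%R]|%E); first by congr (`|_ - _|%E).
  by rewrite subee ?abse0 //; exact: fin_num_measure.
Qed.
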